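(* Let $L$ be a weak Noetherian C-lattice. Then $L$ is sharp if and only if every element of $L$ is principal.
   Context: A multiplicative lattice is a complete lattice $(L,\le)$ with bottom $0$ and top $1$ which is also a commutative monoid with identity $1$ such that $a(\bigvee_\alpha b_\alpha)=\bigvee_\alpha(ab_\alpha)$ for all $a,b_\alpha\in L$. For $x,y\in L$, $(y:x)=\bigvee\{a\in L: ax\le y\}$. An element $c$ is compact if $c\le\bigvee S$ implies $c\le\bigvee T$ for some finite $T\subseteq S$. A C-lattice is a multiplicative lattice in which $1$ is compact, the product of two compact elements is compact, and every element is a join of compact elements. An element $x$ is meet principal if $y\wedge zx=((y:x)\wedge z)x$ for all $y,z\in L$; join principal if $y\vee(z:x)=((yx\vee z):x)$ for all $y,z\in L$; principal if both. $L$ is weak Noetherian if every element is a join of principal elements and every element of $L$ is compact. $L$ is sharp if whenever $a_1a_2\le b$ with $a_1,a_2,b\in L$, there exist $b_1,b_2\in L$ with $a_i\le b_i$ ($i=1,2$) and $b=b_1b_2$. *)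

(* Defs.v *)
From Stdlib Require Import List.

Record MultLattice := {
  carrier :> Type;
  le : carrier -> carrier -> Prop;
  sup : (carrier -> Prop) -> carrier;
  mul : carrier -> carrier -> carrier;
  one : carrier;
  le_refl : forall x, le x x;
  le_antisym : forall x y, le x y -> le y x -> x = y;
  le_trans : forall x y z, le x y -> le y z -> le x z;
  sup_ub : forall (S : carrier -> Prop) x, S x -> le x (sup S);
  sup_least : forall (S : carrier -> Prop) y,
      (forall x, S x -> le x y) -> le (sup S) y;
  one_top : forall x, le x one;
  mulA : forall x y z, mul x (mul y z) = mul (mul x y) z;
  mulC : forall x y, mul x y = mul y x;
  mul1 : forall x, mul one x = x;
  mul_sup : forall a (S : carrier -> Prop),
      mul a (sup S) = sup (fun z => exists b, S b /\ z = mul a b)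
}.

Section Defs.
Variable L : MultLattice.

Definition zero : L := sup L (fun _ => False).
Definition join (x y : L) : L := sup L (fun z => z = x \/ z = y).
Definition meet (x y : L) : L := sup L (fun z => le L z x /\ le L z y).

Definition res (y x : L) : L := sup L (fun a => le L (mul L a x) y).

Definition compact (c : L) : Prop :=
  forall S : L -> Prop, le L c (sup L S) ->
    exists l : list L, (forall x, In x l -> S x) /\
                       le L c (sup L (fun x => In x l)).

Definition C_lattice : Prop :=
  compact (one L) /\
  (forall a b, compact a -> compact b -> compact (mul L a b)) /\
  (forall x : L, exists S : L -> Prop,
      (forall c, S c -> compact c) /\ x = sup L S).

Definition meet_principal (x : L) : Prop :=
  forall y z, meet y (mul L z x) = mul L (meet (res y x) z) x.

Definition join_principal (x : L) : Prop :=
  forall y z, join y (res z x) = res (join (mul L y x) z) x.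

Definition principal (x : L) : Prop := meet_principal x /\ join_principal x.

Definition weak_noetherian : Prop :=
  (forall x : L, exists S : L -> Prop,
      (forall p, S p -> principal p) /\ x = sup L S) /\
  (forall x : L, compact x).

Definition sharp : Prop :=
  forall a1 a2 b : L, le L (mul L a1 a2) b ->
    exists b1 b2 : L, le L a1 b1 /\ le L a2 b2 /\ b = mul L b1 b2.

End Defs.

(* Main.v *)
Require Import Defs.
From Stdlib Require Import List Classical ClassicalEpsilon Lia PeanoNat.

Lemma join_l {L : MultLattice} (x y : L) : le L x (join L x y).
Proof. unfold join; apply sup_ub; auto. Qed.
Lemma join_r {L : MultLattice} (x y : L) : le L y (join L x y).
Proof. unfold join; apply sup_ub; auto. Qed.
Lemma join_lub {L : MultLattice} (x y c : L) :
  le L x c -> le L y c -> le L (join L x y) c.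
Proof. intros. unfold join; apply sup_least; intros z [-> | ->]; auto. Qed.
Lemma join_comm {L : MultLattice} (x y : L) : join L x y = join L y x.
Proof. apply le_antisym; apply join_lub; auto using join_l, join_r. Qed.
Lemma meet_l {L : MultLattice} (x y : L) : le L (meet L x y) x.
Proof. unfold meet; apply sup_least; intros z [H1 H2]; auto. Qed.
Lemma meet_r {L : MultLattice} (x y : L) : le L (meet L x y) y.
Proof. unfold meet; apply sup_least; intros z [H1 H2]; auto. Qed.
Lemma meet_glb {L : MultLattice} (x y c : L) :
  le L c x -> le L c y -> le L c (meet L x y).
Proof. intros. unfold meet; apply sup_ub; auto. Qed.
Lemma zero_le {L : MultLattice} (x : L) : le L (zero L) x.
Proof. unfold zero; apply sup_least; intros _ []. Qed.

Lemma mul_join_le {L : MultLattice} (c a b d : L) :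
  le L (mul L c a) d -> le L (mul L c b) d -> le L (mul L c (join L a b)) d.
Proof.
  intros. unfold join; rewrite mul_sup; apply sup_least.
  intros z [b0 [[-> | ->] ->]]; auto.
Qed.
Lemma mul_le_join {L : MultLattice} (c a b : L) :
  le L (mul L c a) (mul L c (join L a b)).
Proof. unfold join; rewrite mul_sup; apply sup_ub; exists a; auto. Qed.
Lemma mul_mono_r {L : MultLattice} (c a b : L) :
  le L a b -> le L (mul L c a) (mul L c b).
Proof.
  intros H. assert (E : join L a b = b).
  { apply le_antisym; [apply join_lub; auto using le_refl | apply join_r]. }
  rewrite <- E. apply mul_le_join.
Qed.
Lemma mul_mono_l {L : MultLattice} (c a b : L) :
  le L a b -> le L (mul L a c) (mul L b c).
Proof. intros. rewrite !(mulC L _ c). apply mul_mono_r; auto. Qed.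
Lemma mul_mono {L : MultLattice} (a b c d : L) :
  le L a b -> le L c d -> le L (mul L a c) (mul L b d).
Proof.
  intros. apply le_trans with (mul L b c); [apply mul_mono_l | apply mul_mono_r]; auto.
Qed.
Lemma mul_one_r {L : MultLattice} (x : L) : mul L x (one L) = x.
Proof. rewrite mulC; apply mul1. Qed.
Lemma mul_le_l {L : MultLattice} (a b : L) : le L (mul L a b) a.
Proof.
  rewrite <- (mul_one_r a) at 2. apply mul_mono_r, one_top.
Qed.
Lemma mul_le_r {L : MultLattice} (a b : L) : le L (mul L a b) b.
Proof. rewrite mulC; apply mul_le_l. Qed.
Lemma mul_zero {L : MultLattice} (a : L) : mul L a (zero L) = zero L.
Proof.
  apply le_antisym; [| apply zero_le].
  unfold zero at 1; rewrite mul_sup; apply sup_least; intros z [b [[] _]].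
Qed.
Lemma mul_swap {L : MultLattice} (a b c : L) :
  mul L (mul L a b) c = mul L b (mul L a c).
Proof. rewrite (mulC L a b), <- mulA; reflexivity. Qed.
Lemma mul_lcomm {L : MultLattice} (a b c : L) :
  mul L a (mul L b c) = mul L b (mul L a c).
Proof. rewrite mulA; apply mul_swap. Qed.

Lemma res_le {L : MultLattice} (y x : L) : le L (mul L (res L y x) x) y.
Proof.
  rewrite mulC; unfold res; rewrite mul_sup; apply sup_least.
  intros z [b [Hb ->]]; rewrite mulC; exact Hb.
Qed.
Lemma res_intro {L : MultLattice} (a y x : L) :
  le L (mul L a x) y -> le L a (res L y x).
Proof. intros; unfold res; apply sup_ub; auto. Qed.
Lemma res_one {L : MultLattice} (x y : L) : le L x y -> res L y x = one L.
Proof.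
  intros. apply le_antisym; [apply one_top|]. apply res_intro; rewrite mul1; auto.
Qed.
Lemma res_res {L : MultLattice} (z a b : L) :
  res L (res L z a) b = res L z (mul L a b).
Proof.
  apply le_antisym; apply res_intro.
  - rewrite (mulC L a b), mulA. apply le_trans with (mul L (res L z a) a).
    + apply mul_mono_l, res_le.
    + apply res_le.
  - apply res_intro. rewrite <- mulA, (mulC L b a). apply res_le.
Qed.

Lemma zero_principal {L : MultLattice} : principal L (zero L).
Proof.
  split; intros y z.
  - rewrite !mul_zero. apply le_antisym; [apply meet_r | apply zero_le].
  - rewrite !res_one by apply zero_le.
    apply le_antisym; [apply one_top | apply join_r].
Qed.

Lemma mul_principal {L : MultLattice} (a b : L) :
  principal L a -> principal L b -> principal L (mul L a b).
Proof.
  intros [Ham Haj] [Hbm Hbj]. split; intros y z.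
  - rewrite mulA, Hbm, Ham, res_res, (mulC L b a), mulA. reflexivity.
  - rewrite <- res_res, Hbj, Haj, res_res.
    rewrite (mulC L a b), (mulC L y b), mul_swap, (mulC L b a). reflexivity.
Qed.

Definition maximal {L : MultLattice} (m : L) : Prop :=
  m <> one L /\ forall t, le L m t -> t <> one L -> t = m.

Lemma not_one_le {L : MultLattice} (m : L) : maximal m -> ~ le L (one L) m.
Proof. intros [H _] H1; apply H; apply le_antisym; auto using one_top. Qed.

Lemma max_prime {L : MultLattice} (m a b : L) :
  maximal m -> ~ le L a m -> ~ le L b m -> ~ le L (mul L a b) m.
Proof.
  intros [Hm1 Hm2] Ha Hb Hab.
  assert (E : join L m a = one L).
  { destruct (classic (join L m a = one L)) as [E|E]; auto. exfalso. apply Ha.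
    rewrite <- (Hm2 _ (join_l m a) E). apply join_r. }
  apply Hb. rewrite <- (mul_one_r b). rewrite <- E. apply mul_join_le.
  - apply mul_le_r.
  - rewrite mulC; exact Hab.
Qed.

Lemma exists_max {L : MultLattice} (P : L -> Prop) (s0 : L) :
  (forall x : L, compact L x) -> P s0 ->
  exists x, P x /\ forall y, P y -> le L x y -> y = x.
Proof.
  intros Hc H0. apply NNPP; intro Hn.
  assert (H : forall x : {x | P x}, exists y : {y | P y},
             le L (proj1_sig x) (proj1_sig y) /\ proj1_sig y <> proj1_sig x).
  { intros [x Px]. apply NNPP; intro H. apply Hn. exists x; split; auto.
    intros y Py Hxy. apply NNPP; intro Hne. apply H. exists (exist _ y Py); simpl; auto. }
  set (f := fun x => proj1_sig (constructive_indefinite_description _ (H x))).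
  assert (Hf : forall x, le L (proj1_sig x) (proj1_sig (f x)) /\
                         proj1_sig (f x) <> proj1_sig x).
  { intro x; unfold f; destruct (constructive_indefinite_description _ (H x)); auto. }
  set (g := fix g (n : nat) : {x | P x} :=
              match n with O => exist P s0 H0 | S n => f (g n) end).
  assert (Hmono : forall i j, (i <= j)%nat -> le L (proj1_sig (g i)) (proj1_sig (g j))).
  { intros i j Hij; induction Hij. apply le_refl. eapply le_trans; [exact IHHij|].
    apply (proj1 (Hf (g m))). }
  set (T := fun z => exists n, z = proj1_sig (g n)).
  destruct (Hc (sup L T) T (le_refl _ _)) as [l [Hl Hle]].
  assert (HN : exists N, forall z, In z l -> le L z (proj1_sig (g N))).
  { clear Hle. revert Hl. induction l as [|a l IH]; intros Hl.
    - exists O; intros z [].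
    - destruct IH as [N HN]. { intros z Hz; apply Hl; right; auto. }
      destruct (Hl a (or_introl eq_refl)) as [k ->].
      exists (Nat.max N k). intros z [<-|Hz].
      + apply Hmono; lia.
      + eapply le_trans; [apply HN; auto | apply Hmono; lia]. }
  destruct HN as [N HN].
  destruct (Hf (g N)) as [H1 H2]. apply H2. apply le_antisym; auto.
  eapply le_trans. { apply (sup_ub L T). exists (S N). reflexivity. }
  eapply le_trans. { exact Hle. } apply sup_least. exact HN.
Qed.

Lemma exists_maximal_above {L : MultLattice} (s : L) :
  (forall x : L, compact L x) -> s <> one L -> exists m, maximal m /\ le L s m.
Proof.
  intros Hc Hs.
  destruct (exists_max (fun t => le L s t /\ t <> one L) s Hc (conj (le_refl _ _) Hs))
    as [m [[Hsm Hm1] Hmax]].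
  exists m; split; auto. split; auto. intros t Hmt Ht. apply Hmax; auto.
  split; auto. eapply le_trans; eauto.
Qed.

Definition loc {L : MultLattice} (m a b : L) : Prop := ~ le L (res L b a) m.

Lemma le_local {L : MultLattice} (a b : L) :
  (forall x : L, compact L x) -> (forall m, maximal m -> loc m a b) -> le L a b.
Proof.
  intros Hc H. destruct (classic (res L b a = one L)) as [E|E].
  - rewrite <- (mul1 L a). rewrite <- E. apply res_le.
  - destruct (exists_maximal_above _ Hc E) as [m [Hm Hle]]. exfalso; exact (H m Hm Hle).
Qed.

Lemma loc_intro {L : MultLattice} (m a b c : L) :
  le L (mul L c a) b -> ~ le L c m -> loc m a b.
Proof. intros H Hc Hl; apply Hc; eapply le_trans; [apply res_intro; exact H | exact Hl]. Qed.

Lemma loc_le {L : MultLattice} (m a b : L) : maximal m -> le L a b -> loc m a b.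
Proof.
  intros Hm H. apply loc_intro with (one L); [rewrite mul1; auto | apply not_one_le; auto].
Qed.

Lemma loc_trans {L : MultLattice} (m a b c : L) :
  maximal m -> loc m a b -> loc m b c -> loc m a c.
Proof.
  intros Hm H1 H2. apply loc_intro with (mul L (res L c b) (res L b a)).
  - rewrite <- mulA. eapply le_trans; [apply mul_mono_r, res_le | apply res_le].
  - apply max_prime; auto.
Qed.

Lemma loc_join {L : MultLattice} (m a b c : L) :
  maximal m -> loc m a c -> loc m b c -> loc m (join L a b) c.
Proof.
  intros Hm H1 H2. apply loc_intro with (mul L (res L c a) (res L c b)).
  - apply mul_join_le.
    + rewrite (mulC L (res L c a)), <- mulA. eapply le_trans; [apply mul_le_r | apply res_le].
    + rewrite <- mulA. eapply le_trans; [apply mul_le_r | apply res_le].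
  - apply max_prime; auto.
Qed.

Lemma loc_mul {L : MultLattice} (m a b d : L) :
  maximal m -> loc m a b -> loc m (mul L d a) (mul L d b).
Proof.
  intros Hm H. apply loc_intro with (res L b a); auto.
  rewrite mul_lcomm. apply mul_mono_r, res_le.
Qed.

Lemma gens {L : MultLattice} : weak_noetherian L -> forall x : L,
  exists l, (forall p, In p l -> principal L p) /\ x = sup L (fun y => In y l).
Proof.
  intros [Hg Hc] x. destruct (Hg x) as [S [HS Ex]].
  destruct (Hc x S) as [l [Hl Hle]]. { rewrite <- Ex; apply le_refl. }
  exists l; split. { intros; apply HS, Hl; auto. }
  apply le_antisym; auto. apply sup_least; intros y Hy. rewrite Ex; apply sup_ub; auto.
Qed.

Lemma Nak_principal {L : MultLattice} (m p c : L) :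
  maximal m -> principal L p -> loc m p (join L c (mul L m p)) -> loc m p c.
Proof.
  intros Hm [_ Hj] H Hc. apply H. rewrite join_comm, <- Hj.
  apply join_lub; auto using le_refl.
Qed.

Lemma Nak_list {L : MultLattice} (m : L) : maximal m -> forall l,
  (forall p, In p l -> principal L p) -> forall c,
  loc m (sup L (fun x => In x l)) (join L c (mul L m (sup L (fun x => In x l)))) ->
  loc m (sup L (fun x => In x l)) c.
Proof.
  intros Hm l. induction l as [|p l IH]; intros Hl c H.
  - apply loc_le; auto. apply sup_least; intros x [].
  - set (a := sup L (fun x => In x (p :: l))) in *.
    set (A := sup L (fun x => In x l)) in *.
    assert (Hpa : le L p a) by (unfold a; apply (sup_ub L (fun y => In y (p :: l))); left; auto).
    assert (HAa : le L A a) by (unfold A, a; apply sup_least; intros x Hx; apply (sup_ub L (fun y => In y (p :: l))); right; auto).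
    assert (Hap : le L a (join L p A)).
    { unfold a; apply sup_least; intros x [<-|Hx]; [apply join_l|].
      eapply le_trans; [apply (sup_ub L (fun y => In y l)); exact Hx | apply join_r]. }
    assert (Hma' : le L (mul L m a) (join L (mul L m p) (mul L m A))).
    { eapply le_trans; [apply mul_mono_r; exact Hap|]. apply mul_join_le; [apply join_l | apply join_r]. }
    assert (Hma : le L (mul L m a) (join L (mul L m p) A)).
    { eapply le_trans; [exact Hma'|]. apply join_lub; [apply join_l|].
      eapply le_trans; [apply mul_le_r | apply join_r]. }
    assert (Hp : principal L p) by (apply Hl; left; auto).
    assert (S1 : loc m p (join L c A)).
    { apply Nak_principal; auto.
      apply loc_trans with (join L c (mul L m a)); auto.
      - apply loc_trans with a; auto. apply loc_le; auto.
      - apply loc_le; auto. apply join_lub.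
        + eapply le_trans; apply join_l.
        + eapply le_trans; [exact Hma|]. apply join_lub; [apply join_r|].
          eapply le_trans; [apply join_r | apply join_l]. }
    assert (S2 : loc m A (join L c (mul L m p))).
    { apply IH. { intros; apply Hl; right; auto. }
      apply loc_trans with a; [exact Hm | apply loc_le; auto |].
      apply loc_trans with (join L c (mul L m a)); auto.
      apply loc_le; auto. apply join_lub.
      - eapply le_trans; apply join_l.
      - eapply le_trans; [exact Hma'|]. apply join_lub; [|apply join_r].
        eapply le_trans; [apply join_r | apply join_l]. }
    assert (S3 : loc m p c).
    { apply Nak_principal; auto. apply loc_trans with (join L c A); auto.
      apply loc_join; auto. apply loc_le; auto. apply join_l. }
    assert (S4 : loc m (mul L m p) c).
    { apply loc_trans with (mul L m c); auto. apply loc_mul; auto. apply loc_le; auto; apply mul_le_r. }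
    assert (S5 : loc m A c).
    { apply loc_trans with (join L c (mul L m p)); auto. apply loc_join; auto. apply loc_le; auto; apply le_refl. }
    apply loc_trans with (join L p A); auto. apply loc_le; auto. apply loc_join; auto.
Qed.

Lemma Nak {L : MultLattice} (m x c : L) : weak_noetherian L -> maximal m ->
  loc m x (join L c (mul L m x)) -> loc m x c.
Proof.
  intros HW Hm. destruct (gens HW x) as [l [Hl Ex]]. subst x. apply Nak_list; auto.
Qed.

Lemma principal_of_local {L : MultLattice} (x : L) :
  (forall y : L, compact L y) ->
  (forall m, maximal m -> exists p, principal L p /\ le L p x /\ loc m x p) ->
  principal L x.
Proof.
  intros Hc H. split.
  - intros y z. apply le_antisym.
    + apply le_local; auto. intros m Hm.
      destruct (H m Hm) as [p [[Hpm Hpj] [Hpx Hloc]]].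
      set (r := res L p x) in *.
      apply loc_intro with (mul L r r); [| apply max_prime; auto].
      set (w := meet L y (mul L z x)).
      assert (Hrx : le L (mul L r x) p) by apply res_le.
      assert (H1 : le L (mul L r w) (meet L y (mul L z p))).
      { apply meet_glb.
        - eapply le_trans; [apply mul_le_r | apply meet_l].
        - eapply le_trans; [apply mul_mono_r, meet_r|].
          rewrite mul_lcomm. apply mul_mono_r; auto. }
      rewrite (Hpm y z) in H1.
      set (M := meet L (res L y p) z) in *.
      assert (H2 : le L (mul L r M) (meet L (res L y x) z)).
      { apply meet_glb.
        - apply res_intro. rewrite mul_swap.
          eapply le_trans; [apply mul_mono_r; exact Hrx|].
          eapply le_trans; [apply mul_mono_l, meet_l | apply res_le].
        - eapply le_trans; [apply mul_le_r | apply meet_r]. }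
      rewrite <- mulA. eapply le_trans; [apply mul_mono_r; exact H1|].
      rewrite mulA. eapply le_trans; [apply mul_mono_l; exact H2|].
      apply mul_mono_r; auto.
    + apply meet_glb.
      * eapply le_trans; [apply mul_mono_l, meet_l | apply res_le].
      * apply mul_mono_l, meet_r.
  - intros y z. apply le_antisym.
    + apply join_lub.
      * apply res_intro, join_l.
      * apply res_intro. eapply le_trans; [apply res_le | apply join_r].
    + apply le_local; auto. intros m Hm.
      destruct (H m Hm) as [p [[Hpm Hpj] [Hpx Hloc]]].
      set (r := res L p x) in *.
      apply loc_intro with (mul L r r); [| apply max_prime; auto].
      set (t := res L (join L (mul L y x) z) x).
      assert (Hrx : le L (mul L r x) p) by apply res_le.
      assert (H1 : le L (mul L (mul L r t) p) (join L (mul L y p) z)).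
      { eapply le_trans; [apply mul_mono_r; exact Hpx|].
        rewrite <- mulA. eapply le_trans; [apply mul_mono_r, res_le|].
        apply mul_join_le.
        - rewrite mul_lcomm. eapply le_trans; [apply mul_mono_r; exact Hrx | apply join_l].
        - eapply le_trans; [apply mul_le_r | apply join_r]. }
      assert (H2 : le L (mul L r t) (join L y (res L z p))).
      { rewrite (Hpj y z). apply res_intro; exact H1. }
      assert (H3 : le L (mul L r (join L y (res L z p))) (join L y (res L z x))).
      { apply mul_join_le.
        - eapply le_trans; [apply mul_le_r | apply join_l].
        - eapply le_trans; [|apply join_r]. apply res_intro.
          rewrite mul_swap. eapply le_trans; [apply mul_mono_r; exact Hrx | apply res_le]. }
      rewrite <- mulA. eapply le_trans; [apply mul_mono_r; exact H2 | exact H3].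
Qed.

Lemma local_max {L : MultLattice} (m : L) : sharp L -> weak_noetherian L -> maximal m ->
  exists q, principal L q /\ le L q m /\ loc m m q.
Proof.
  intros Hsh HW Hm. destruct (gens HW m) as [l [Hl Em]].
  assert (Hpm : forall p, In p l -> le L p m).
  { intros p Hp. rewrite Em. apply (sup_ub L (fun y => In y l)); auto. }
  assert (Hdich : forall p, In p l ->
            join L p (mul L m m) = m \/ join L p (mul L m m) = mul L m m).
  { intros p Hp.
    destruct (Hsh m m (join L p (mul L m m)) (join_r _ _)) as [b1 [b2 [H1 [H2 Eb]]]].
    assert (Hbm : le L (join L p (mul L m m)) m) by (apply join_lub; [auto | apply mul_le_l]).
    pose proof Hm as [Hm1 Hm2].
    destruct (classic (b1 = one L)) as [E1|E1]; destruct (classic (b2 = one L)) as [E2|E2].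
    - exfalso. apply (not_one_le m Hm). rewrite Eb, E1, E2, mul1 in Hbm. exact Hbm.
    - left. rewrite Eb, E1, mul1. apply Hm2; auto.
    - left. rewrite Eb, E2, mul_one_r. apply Hm2; auto.
    - right. rewrite Eb, (Hm2 b1 H1 E1), (Hm2 b2 H2 E2). reflexivity. }
  destruct (classic (exists p, In p l /\ join L p (mul L m m) = m)) as [[p [Hp E]]|Hn].
  - exists p. split; [auto | split; auto]. apply Nak; auto.
    rewrite E. apply loc_le; auto. apply le_refl.
  - exists (zero L). split; [apply zero_principal | split; [apply zero_le|]].
    apply Nak; auto. apply loc_le; auto. eapply le_trans; [|apply join_r].
    apply le_trans with (sup L (fun y => In y l)); [rewrite <- Em; apply le_refl|].
    apply sup_least; intros p Hp. destruct (Hdich p Hp) as [E|E].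
    + exfalso; apply Hn; eauto.
    + rewrite <- E; apply join_l.
Qed.

Definition locpr {L : MultLattice} (m x : L) : Prop :=
  exists p, principal L p /\ le L p x /\ loc m x p.

Lemma step2b {L : MultLattice} (m q : L) : sharp L -> weak_noetherian L -> maximal m ->
  principal L q -> le L q m -> loc m m q -> forall x, locpr m x.
Proof.
  intros Hsh HW Hm Hq Hqm Hlq. pose proof (proj2 HW) as Hc.
  apply NNPP; intro Hn. apply not_all_ex_not in Hn. destruct Hn as [x0 Hx0].
  destruct (exists_max (fun x => ~ locpr m x) x0 Hc Hx0) as [x [Hx Hmax]].
  apply Hx.
  assert (Hzero : loc m x (zero L) -> locpr m x).
  { intros H; exists (zero L); split; [apply zero_principal | split; [apply zero_le | auto]]. }
  destruct (classic (le L x m)) as [Hxm|Hxm].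
  2:{ destruct (gens HW x) as [l [Hl Ex]].
      assert (Hp : exists p, In p l /\ ~ le L p m).
      { apply NNPP; intro Hn. apply Hxm. rewrite Ex. apply sup_least; intros p Hp.
        apply NNPP; intro; apply Hn; eauto. }
      destruct Hp as [p [Hp Hpm]]. exists p. split; [auto | split].
      - rewrite Ex. apply (sup_ub L (fun y => In y l)); auto.
      - apply loc_intro with p; auto. apply mul_le_l. }
  set (r0 := res L x m).
  destruct (Hsh m r0 x) as [b1 [b2 [H1 [H2 E]]]].
  { rewrite mulC; apply res_le. }
  pose proof Hm as [Hm1 Hm2].
  assert (Hxr : le L x r0) by (apply res_intro, mul_le_l).
  destruct (classic (b1 = one L)) as [E1|E1].
  - assert (Hrx : le L r0 x) by (rewrite E, E1, mul1; auto).
    apply Hzero. apply Nak; auto.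
    set (u := res L q m). set (v := res L x q).
    assert (Hux : le L (mul L u x) (mul L v q)).
    { pose proof (proj1 Hq x (one L)) as Hmq. rewrite mul1 in Hmq.
      apply le_trans with (meet L x q).
      - apply meet_glb; [apply mul_le_r|].
        eapply le_trans; [apply mul_mono_r; exact Hxm | apply res_le].
      - rewrite Hmq. apply mul_mono_l, meet_l. }
    assert (Huv : le L (mul L u v) x).
    { apply le_trans with r0; auto. apply res_intro. rewrite mul_swap.
      eapply le_trans; [apply mul_mono_r, res_le | apply res_le]. }
    apply loc_intro with (mul L u u); [| apply max_prime; auto].
    rewrite <- mulA. eapply le_trans; [apply mul_mono_r; exact Hux|].
    rewrite mulA. eapply le_trans; [apply mul_mono_l; exact Huv|].
    eapply le_trans; [|apply join_r]. rewrite (mulC L m x). apply mul_mono_r; auto.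
  - rewrite (Hm2 b1 H1 E1) in E.
    assert (Ex : x = mul L m r0).
    { apply le_antisym.
      - rewrite E at 1. apply mul_mono_r. apply res_intro. rewrite mulC, <- E. apply le_refl.
      - rewrite mulC; apply res_le. }
    destruct (classic (r0 = x)) as [Er|Er].
    + apply Hzero. apply Nak; auto. apply loc_le; auto.
      eapply le_trans; [|apply join_r].
      assert (Exx : x = mul L m x) by (transitivity (mul L m r0); [exact Ex | rewrite Er; reflexivity]).
      rewrite <- Exx. apply le_refl.
    + destruct (classic (locpr m r0)) as [Hr|Hr].
      2:{ exfalso; apply Er; apply Hmax; auto. }
      destruct Hr as [p' [Hp' [Hp'r Hlp']]].
      exists (mul L q p'). split; [apply mul_principal; auto | split].
      * rewrite Ex. apply mul_mono; auto.
      * apply loc_trans with (mul L r0 q); auto.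
        -- rewrite Ex at 1. rewrite (mulC L m r0). apply loc_mul; auto.
        -- rewrite (mulC L r0 q). apply loc_mul; auto.
Qed.

Theorem corollary2p7 (L : MultLattice) :
  C_lattice L -> weak_noetherian L ->
  (sharp L <-> forall x : L, principal L x).
Proof.
  intros HC HW. split.
  - intros Hsh x. apply principal_of_local; [exact (proj2 HW)|].
    intros m Hm. destruct (local_max m Hsh HW Hm) as [q [Hq [Hqm Hlq]]].
    exact (step2b m q Hsh HW Hm Hq Hqm Hlq x).
  - intros Hall a1 a2 b Hab. exists (join L a1 b), (res L b (join L a1 b)).
    split; [apply join_l | split].
    + apply res_intro. apply mul_join_le.
      * rewrite mulC; exact Hab.
      * apply mul_le_r.
    + destruct (Hall (join L a1 b)) as [Hm _]. specialize (Hm b (one L)).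
      rewrite mul1 in Hm.
      assert (E1 : meet L b (join L a1 b) = b).
      { apply le_antisym; [apply meet_l | apply meet_glb; [apply le_refl | apply join_r]]. }
      assert (E2 : meet L (res L b (join L a1 b)) (one L) = res L b (join L a1 b)).
      { apply le_antisym; [apply meet_l | apply meet_glb; [apply le_refl | apply one_top]]. }
      rewrite E1, E2 in Hm. rewrite mulC. exact Hm.
Qed.
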